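(* Let $(\mathcal C,\otimes,\mathbf 1)$ be a monoidal r-category, let $X\in\mathcal C$, and let $\mathrm{coev}_X:\mathbf 1\to X\otimes X^*$ be the canonical coevaluation morphism. Let $\mathrm{ev}_X:X^*\otimes X\to\mathbf 1$ be an arbitrary morphism. Then (suppressing associativity and unit constraints) the identity $$(\mathrm{id}_X\otimes \mathrm{ev}_X)\circ(\mathrm{coev}_X\otimes \mathrm{id}_X)=\mathrm{id}_X$$ holds if and only if the identity $$(\mathrm{ev}_X\otimes \mathrm{id}_{X^*})\circ(\mathrm{id}_{X^*}\otimes \mathrm{coev}_X)=\mathrm{id}_{X^*}$$ holds.
   Context: A monoidal category $(\mathcal C,\otimes,\mathbf 1)$ is called a monoidal r-category if (i) for every object $X$ the functor $Y\mapsto \mathrm{Hom}(\mathbf 1,X\otimes Y)$ is representable by an object $X^*$, i.e. there are isomorphisms $\mathrm{Hom}(\mathbf 1,X\otimes Y)\cong\mathrm{Hom}(X^*,Y)$ natural in $Y$; and (ii) the resulting functor $X\mapsto X^*$, $\mathcal C\to\mathcal C^{\mathrm{op}}$, is an equivalence of categories (its inverse is denoted $X\mapsto {}^*X$). The canonical coevaluation $\mathrm{coev}_X:\mathbf 1\to X\otimes X^*$ is the morphism corresponding to $\mathrm{id}_{X^*}$ under $\mathrm{Hom}(\mathbf 1,X\otimes X^* )\cong \mathrm{Hom}(X^*,X^* )$. *)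

(* Defs.v *)
Record MonCat : Type := {
  ob : Type;
  hom : ob -> ob -> Type;
  idm : forall a, hom a a;
  comp : forall a b c, hom b c -> hom a b -> hom a c;
  comp_assoc : forall a b c d (f : hom c d) (g : hom b c) (h : hom a b),
      comp _ _ _ (comp _ _ _ f g) h = comp _ _ _ f (comp _ _ _ g h);
  comp_id_l : forall a b (f : hom a b), comp _ _ _ (idm b) f = f;
  comp_id_r : forall a b (f : hom a b), comp _ _ _ f (idm a) = f;
  tens : ob -> ob -> ob;
  tensm : forall a b c d, hom a b -> hom c d -> hom (tens a c) (tens b d);
  tens_id : forall a b, tensm _ _ _ _ (idm a) (idm b) = idm (tens a b);
  tens_comp : forall a1 b1 c1 a2 b2 c2
      (f1 : hom b1 c1) (g1 : hom a1 b1) (f2 : hom b2 c2) (g2 : hom a2 b2),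
      tensm _ _ _ _ (comp _ _ _ f1 g1) (comp _ _ _ f2 g2)
      = comp _ _ _ (tensm _ _ _ _ f1 f2) (tensm _ _ _ _ g1 g2);
  unit : ob;
  asc : forall a b c, hom (tens (tens a b) c) (tens a (tens b c));
  asc_inv : forall a b c, hom (tens a (tens b c)) (tens (tens a b) c);
  asc_inv_asc : forall a b c,
      comp _ _ _ (asc_inv a b c) (asc a b c) = idm _;
  asc_asc_inv : forall a b c,
      comp _ _ _ (asc a b c) (asc_inv a b c) = idm _;
  asc_nat : forall a a' b b' c c' (f : hom a a') (g : hom b b') (h : hom c c'),
      comp _ _ _ (asc a' b' c') (tensm _ _ _ _ (tensm _ _ _ _ f g) h)
      = comp _ _ _ (tensm _ _ _ _ f (tensm _ _ _ _ g h)) (asc a b c);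
  lu : forall a, hom (tens unit a) a;
  lu_inv : forall a, hom a (tens unit a);
  lu_inv_lu : forall a, comp _ _ _ (lu_inv a) (lu a) = idm _;
  lu_lu_inv : forall a, comp _ _ _ (lu a) (lu_inv a) = idm _;
  lu_nat : forall a b (f : hom a b),
      comp _ _ _ (lu b) (tensm _ _ _ _ (idm unit) f) = comp _ _ _ f (lu a);
  ru : forall a, hom (tens a unit) a;
  ru_inv : forall a, hom a (tens a unit);
  ru_inv_ru : forall a, comp _ _ _ (ru_inv a) (ru a) = idm _;
  ru_ru_inv : forall a, comp _ _ _ (ru a) (ru_inv a) = idm _;
  ru_nat : forall a b (f : hom a b),
      comp _ _ _ (ru b) (tensm _ _ _ _ f (idm unit)) = comp _ _ _ f (ru a);
  pentagon : forall a b c d,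
      comp _ _ _ (asc a b (tens c d)) (asc (tens a b) c d)
      = comp _ _ _ (tensm _ _ _ _ (idm a) (asc b c d))
          (comp _ _ _ (asc a (tens b c) d) (tensm _ _ _ _ (asc a b c) (idm d)));
  triangle : forall a b,
      comp _ _ _ (tensm _ _ _ _ (idm a) (lu b)) (asc a unit b)
      = tensm _ _ _ _ (ru a) (idm b)
}.

Arguments idm {C} a : rename.
Arguments comp {C a b c} f g : rename.
Arguments tens {C} a b : rename.
Arguments tensm {C a b c d} f g : rename.
Arguments unit {C} : rename.
Arguments asc {C} a b c : rename.
Arguments asc_inv {C} a b c : rename.
Arguments lu {C} a : rename.
Arguments lu_inv {C} a : rename.
Arguments ru {C} a : rename.
Arguments ru_inv {C} a : rename.

(* Right representability data: for every X an object X^* and bijections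
   Hom(1, X (x) Y) ~ Hom(X^*, Y), natural in Y. *)
Record RStructure (C : MonCat) : Type := {
  dual : ob C -> ob C;
  rphi : forall (X Y : ob C), hom C unit (tens X Y) -> hom C (dual X) Y;
  rpsi : forall (X Y : ob C), hom C (dual X) Y -> hom C unit (tens X Y);
  rphi_rpsi : forall X Y (f : hom C (dual X) Y), rphi X Y (rpsi X Y f) = f;
  rpsi_rphi : forall X Y (h : hom C unit (tens X Y)), rpsi X Y (rphi X Y h) = h;
  rphi_nat : forall X Y Y' (g : hom C Y Y') (h : hom C unit (tens X Y)),
      rphi X Y' (comp (tensm (idm X) g) h) = comp g (rphi X Y h)
}.

Arguments dual {C} R X : rename.
Arguments rphi {C} R X Y h : rename.
Arguments rpsi {C} R X Y f : rename.

Definition coev {C : MonCat} (R : RStructure C) (X : ob C)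
  : hom C unit (tens X (dual R X)) :=
  rpsi R X (dual R X) (idm (dual R X)).

(* action of X |-> X^* on morphisms, induced by representability (Yoneda) *)
Definition dual_hom {C : MonCat} (R : RStructure C) {X X' : ob C}
  (f : hom C X X') : hom C (dual R X') (dual R X) :=
  rphi R X' (dual R X) (comp (tensm f (idm (dual R X))) (coev R X)).

Definition is_iso {C : MonCat} {a b : ob C} (f : hom C a b) : Prop :=
  exists g : hom C b a, comp g f = idm a /\ comp f g = idm b.

Definition dual_equivalence {C : MonCat} (R : RStructure C) : Prop :=
  (forall X X' : ob C,
     exists g : hom C (dual R X') (dual R X) -> hom C X X',
       (forall f, g (dual_hom R f) = f) /\ (forall h, dual_hom R (g h) = h))
  /\ (forall Y : ob C, exists X : ob C, exists f : hom C (dual R X) Y, is_iso f).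

Definition r_category {C : MonCat} (R : RStructure C) : Prop :=
  dual_equivalence R.

Definition zig {C : MonCat} (R : RStructure C) (X : ob C)
  (ev : hom C (tens (dual R X) X) unit) : Prop :=
  comp (ru X)
    (comp (tensm (idm X) ev)
       (comp (asc X (dual R X) X)
          (comp (tensm (coev R X) (idm X)) (lu_inv X))))
  = idm X.

Definition zag {C : MonCat} (R : RStructure C) (X : ob C)
  (ev : hom C (tens (dual R X) X) unit) : Prop :=
  comp (lu (dual R X))
    (comp (tensm ev (idm (dual R X)))
       (comp (asc_inv (dual R X) X (dual R X))
          (comp (tensm (idm (dual R X)) (coev R X)) (ru_inv (dual R X)))))
  = idm (dual R X).

(* Main.v *)
Require Import Defs.
From Corelib Require Import ssreflect.
Section S.
Variable C : MonCat.
Implicit Types a b c d x y z : ob C.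
Local Notation "f ∘ g" := (comp f g) (at level 40, left associativity).
Local Notation "f ⊗ g" := (tensm f g) (at level 30).
Lemma cA {a b c d} (f : hom C c d) (g : hom C b c) (h : hom C a b) : (f∘g)∘h = f∘(g∘h).
Proof. exact (comp_assoc C _ _ _ _ f g h). Qed.
Lemma c1l {a b} (f : hom C a b) : idm b ∘ f = f. Proof. exact (comp_id_l C _ _ f). Qed.
Lemma c1r {a b} (f : hom C a b) : f ∘ idm a = f. Proof. exact (comp_id_r C _ _ f). Qed.
Lemma tid a b : idm a ⊗ idm b = idm (tens a b). Proof. exact (tens_id C a b). Qed.
Lemma tc {a1 b1 c1 a2 b2 c2 : ob C} (f1 : hom C b1 c1) (g1 : hom C a1 b1) (f2 : hom C b2 c2) (g2 : hom C a2 b2) :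
  (f1∘g1)⊗(f2∘g2) = (f1⊗f2)∘(g1⊗g2). Proof. exact (tens_comp C _ _ _ _ _ _ f1 g1 f2 g2). Qed.
Lemma tcl {a b c d} (f : hom C b c) (g : hom C a b) : (f∘g)⊗idm d = (f⊗idm d)∘(g⊗idm d).
Proof. by rewrite -tc c1l. Qed.
Lemma tcr {a b c d} (f : hom C b c) (g : hom C a b) : idm d ⊗ (f∘g) = (idm d ⊗ f)∘(idm d ⊗ g).
Proof. by rewrite -tc c1l. Qed.
Lemma nat_inv {x y x' y' : ob C} (i: hom C x y) (j: hom C y x) (i': hom C x' y') (j' : hom C y' x')
  (p: hom C x x') (q: hom C y y') : i∘j = idm y -> j'∘i' = idm x' -> i'∘p = q∘i -> j'∘q = p∘j.
Proof.
move=> H1 H2 H3. transitivity (j'∘q∘(i∘j)); first by rewrite H1 c1r.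
rewrite -cA (cA j' q i) -H3 -(cA j' i' p) H2 c1l. done.
Qed.
Lemma mono {x y z} (i : hom C y z) (j : hom C z y) (f g : hom C x y) : j∘i = idm y -> i∘f = i∘g -> f = g.
Proof. move=> H E. by rewrite -(c1l f) -H cA E -cA H c1l. Qed.
Lemma epi {x y z} (i : hom C x y) (j : hom C y x) (f g : hom C y z) : i∘j = idm y -> f∘i = g∘i -> f = g.
Proof. move=> H E. by rewrite -(c1r f) -H -cA E cA H c1r. Qed.
Lemma asc_inv_nat a (a' : ob C) b (b' : ob C) c (c' : ob C) (f : hom C a a') (g : hom C b b') (h : hom C c c') :
  asc_inv a' b' c' ∘ (f⊗(g⊗h)) = ((f⊗g)⊗h) ∘ asc_inv a b c.
Proof. apply: (nat_inv (asc a b c) _ (asc a' b' c')). apply asc_asc_inv. apply asc_inv_asc. apply asc_nat. Qed.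
Lemma lu_inv_nat a b (f : hom C a b) : lu_inv b ∘ f = (idm unit ⊗ f) ∘ lu_inv a.
Proof. apply: (nat_inv (lu a) _ (lu b)). apply lu_lu_inv. apply lu_inv_lu. apply lu_nat. Qed.
Lemma ru_inv_nat a b (f : hom C a b) : ru_inv b ∘ f = (f ⊗ idm unit) ∘ ru_inv a.
Proof. apply: (nat_inv (ru a) _ (ru b)). apply ru_ru_inv. apply ru_inv_ru. apply ru_nat. Qed.
Lemma faith_l a b (f g : hom C a b) : idm unit ⊗ f = idm unit ⊗ g -> f = g.
Proof. move=> E. apply: (epi (lu a) (lu_inv a)). apply lu_lu_inv. by rewrite -!lu_nat E. Qed.
Lemma faith_r a b (f g : hom C a b) : f ⊗ idm unit = g ⊗ idm unit -> f = g.
Proof. move=> E. apply: (epi (ru a) (ru_inv a)). apply ru_ru_inv. by rewrite -!ru_nat E. Qed.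
Lemma K1 a b : lu (tens a b) ∘ asc unit a b = lu a ⊗ idm b.
Proof.
apply faith_l.
apply: (epi (asc unit (tens unit a) b ∘ (asc unit unit a ⊗ idm b)) ((asc_inv unit unit a ⊗ idm b) ∘ asc_inv unit (tens unit a) b)).
  by rewrite cA -(cA (asc unit unit a ⊗ idm b)) -tcl asc_asc_inv tid c1l asc_asc_inv.
rewrite tcr cA -pentagon -cA triangle -(tid a b). rewrite -asc_nat -triangle tcl -cA asc_nat cA. done.
Qed.
Lemma K2 a b : (idm a ⊗ ru b) ∘ asc a b unit = ru (tens a b).
Proof.
apply faith_r.
apply: (mono (asc a b unit) (asc_inv a b unit)). apply asc_inv_asc.
rewrite -triangle -(tid a b) -cA asc_nat cA pentagon -cA -tcr triangle -cA -asc_nat cA -tcl. done.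
Qed.
Lemma lu_tens a : lu (tens unit a) = idm unit ⊗ lu a.
Proof. apply: (mono (lu a) (lu_inv a)). apply lu_inv_lu. by rewrite lu_nat. Qed.
Lemma K3 : lu (@unit C) = ru unit.
Proof. apply faith_r. by rewrite -K1 -triangle lu_tens. Qed.
Lemma K3inv : lu_inv (@unit C) = ru_inv unit.
Proof. by rewrite -(c1r (lu_inv unit)) -(ru_ru_inv C unit) -cA -K3 lu_inv_lu c1l. Qed.
Lemma K1inv a b : lu_inv a ⊗ idm b = asc_inv unit a b ∘ lu_inv (tens a b).
Proof.
apply: (mono (lu a ⊗ idm b) (lu_inv a ⊗ idm b)). by rewrite -tcl lu_inv_lu tid.
rewrite -tcl lu_lu_inv tid -K1 cA -(cA (asc unit a b)) asc_asc_inv c1l lu_lu_inv. done.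
Qed.
Lemma K2inv a b : idm a ⊗ ru_inv b = asc a b unit ∘ ru_inv (tens a b).
Proof.
apply: (mono (idm a ⊗ ru b) (idm a ⊗ ru_inv b)). by rewrite -tcr ru_inv_ru tid.
rewrite -tcr ru_ru_inv tid -cA K2 ru_ru_inv. done.
Qed.
Lemma pent X D (e : hom C (tens D X) unit) :
  (idm X ⊗ lu D) ∘ (idm X ⊗ (e ⊗ idm D)) ∘ (idm X ⊗ asc_inv D X D) ∘ asc X D (tens X D)
  = (ru X ⊗ idm D) ∘ ((idm X ⊗ e) ⊗ idm D) ∘ (asc X D X ⊗ idm D) ∘ asc_inv (tens X D) X D.
Proof.
apply: (epi (asc (tens X D) X D) (asc_inv (tens X D) X D)). apply asc_asc_inv.
rewrite !cA asc_inv_asc c1r pentagon -(cA (idm X ⊗ asc_inv D X D)) -tcr asc_inv_asc tid c1l.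
rewrite -(cA (idm X ⊗ (e ⊗ idm D))) -asc_nat cA -(cA (idm X ⊗ lu D)) triangle. done.
Qed.
Lemma key X D (c : hom C unit (tens X D)) (e : hom C (tens D X) unit) :
  (ru X ∘ ((idm X ⊗ e) ∘ (asc X D X ∘ ((c ⊗ idm X) ∘ lu_inv X)))) ⊗ idm D ∘ c
  = (idm X ⊗ (lu D ∘ ((e ⊗ idm D) ∘ (asc_inv D X D ∘ ((idm D ⊗ c) ∘ ru_inv D))))) ∘ c.
Proof.
have h2 : ((c ⊗ idm X) ⊗ idm D) ∘ (asc_inv unit X D ∘ ((idm unit ⊗ c) ∘ lu_inv unit))
   = asc_inv (tens X D) X D ∘ ((c ⊗ c) ∘ lu_inv unit).
  by rewrite -cA -asc_inv_nat cA tid -(cA (c ⊗ idm _)) -tc c1l c1r.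
have h3 : (idm X ⊗ (idm D ⊗ c)) ∘ (asc X D unit ∘ ((c ⊗ idm unit) ∘ ru_inv unit))
   = asc X D (tens X D) ∘ ((c ⊗ c) ∘ ru_inv unit).
  by rewrite -cA -asc_nat cA tid -(cA (idm _ ⊗ c)) -tc c1l c1r.
rewrite !tcl !tcr !cA K1inv K2inv !cA lu_inv_nat ru_inv_nat h2 h3 K3inv -!cA pent. done.
Qed.
End S.

Theorem lemma2p6 (C : MonCat) (R : RStructure C) (HR : r_category R)
  (X : ob C) (ev : hom C (tens (dual R X) X) unit) :
  zig R X ev <-> zag R X ev.
Proof.
have rpsiE : forall Y (f : hom C (dual R X) Y), rpsi R X Y f = comp (tensm (idm X) f) (coev R X).
  move=> Y f.
  have E : rphi R X Y (comp (tensm (idm X) f) (coev R X)) = f.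
    by rewrite rphi_nat /coev rphi_rpsi comp_id_r.
  by rewrite -{1}E rpsi_rphi.
have dual_id : rphi R X (dual R X) (coev R X) = idm _ by rewrite /coev rphi_rpsi.
have K := key C X (dual R X) (coev R X) ev.
rewrite /zig /zag; split => Hz.
- rewrite Hz tid c1l in K.
  apply: (eq_trans (eq_sym (rphi_rpsi C R X _ _))).
  by rewrite rpsiE -K dual_id.
- rewrite Hz tid c1l in K.
  have [g [Hg _]] := proj1 HR X X.
  rewrite -[LHS]Hg -[RHS]Hg. congr (g _).
  by rewrite /dual_hom K tid c1l.
Qed.
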